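(* Let $p$ be a prime and let $q$ be a prime with $p < q < 2p-1$ such that $2p-1$ is prime and $\{p, q, 2p-1\}$ is a symmetric triple. Write $q = p + d$. Then $d = \frac{p-1}{3}$ or $d = \frac{p-1}{2}$.
   Context: Two distinct primes $p$ and $q$ form a symmetric pair if $\gcd(p-1, q-1) = |p-q|$. A symmetric triple is a set of three primes such that any two of them form a symmetric pair. *)

(* Defs.v *)
From mathcomp Require Import all_boot.
Set Implicit Arguments. Unset Strict Implicit. Unset Printing Implicit Defensive.

(* Absolute difference |p - q| on naturals (truncated subtractions: one is 0). *)
Definition absdiff (p q : nat) : nat := (p - q) + (q - p).

Definition sym_pair (p q : nat) : Prop :=
  [/\ prime p, prime q, p != q & gcdn p.-1 q.-1 = absdiff p q].

Definition sym_triple (a b c : nat) : Prop :=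
  [/\ sym_pair a b, sym_pair a c & sym_pair b c].

(* Main.v *)
Require Import Defs.
From mathcomp Require Import all_boot.
From mathcomp Require Import zify.

Theorem theorem1 (p q : nat) :
  prime p -> prime q -> p < q -> q < (2 * p).-1 -> prime (2 * p).-1 ->
  sym_triple p q (2 * p).-1 ->
  let d := q - p in
  3 * d = p.-1 \/ 2 * d = p.-1.
Proof.
move=> pp pq lpq lqr pr [[_ _ _ H1] _ [_ _ _ H3]] d.
have p2 := prime_gt1 pp.
have Hd : gcdn p.-1 q.-1 = d by rewrite H1 /absdiff /d; lia.
have He : gcdn q.-1 (2 * p).-1.-1 = p.-1 - d by rewrite H3 /absdiff /d; lia.
have d0 : 0 < d by rewrite /d; lia.
have : d %| p.-1 by rewrite -Hd dvdn_gcdl.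
case/dvdnP=> k Hk.
have [k' ek] : exists k', k = k'.+2.
  case: k Hk => [|[|k]] Hk; last by exists k.
  - rewrite mul0n in Hk; rewrite /d in d0; lia.
  - rewrite mul1n in Hk; rewrite /d in Hk; lia.
subst k.
have E1 : p.-1 - d = k'.+1 * d by rewrite Hk mulSn; lia.
have E2 : q.-1 = k'.+1 * d + 2 * d.
  have -> : q.-1 = p.-1 + d by rewrite /d; lia.
  rewrite Hk !mulSn; lia.
have h1 : k'.+1 * d %| q.-1 by rewrite -E1 -He dvdn_gcdl.
rewrite E2 dvdn_addr // dvdn_pmul2r // in h1.
have := dvdn_leq (isT : 0 < 2) h1.
case: k' Hk h1 {E1 E2} => [|[|k]] Hk h1 //= _; [right|left]; lia.
Qed.
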